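(* Let $\mathcal{G}=\langle G_1,\dots,G_L\rangle$ be a non-strict temporal graph with vertex set $V$, $|V|=n$, in which every layer consists of exactly two components and no two consecutive layers have the same partition. If there are $1+\log_2 n$ consecutive free transitions (i.e., the transitions from step $j$ to step $j+1$ are free for all $j\in\{t,t+1,\dots,t+m-1\}$ with $m\ge 1+\log_2 n$ and $t+m\le L$), then for every $s\in V$ there is a non-strict exploration schedule starting at $s$.
   Context: A non-strict temporal graph $\mathcal{G}=\langle G_1,\dots,G_L\rangle$ with vertex set $V$ is a sequence of partitions $G_t$ of $V$ into components. A non-strict temporal walk starting at $v$ at time $t_1$ is a sequence of components $C_{t_1},\dots,C_{t_l}$ with $t_{j+1}=t_j+1$, $C_{t_j}\in G_{t_j}$, $C_{t_j}\cap C_{t_{j+1}}\neq\emptyset$, $v\in C_{t_1}$, $t_l\le L$; it visits $\bigcup_j C_{t_j}$. A non-strict exploration schedule starting at $s$ is such a walk starting at $s$ at time $1$ that visits all of $V$. For $G_i=\{A_i,B_i\}$, $G_{i+1}=\{A_{i+1},B_{i+1}\}$, the transition from step $i$ to $i+1$ is free if $A_i\cap A_{i+1}$, $A_i\cap B_{i+1}$, $B_i\cap A_{i+1}$, $B_i\cap B_{i+1}$ are all non-empty. *)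

(* Defs.v *)
From mathcomp Require Import all_boot.
Set Implicit Arguments. Unset Strict Implicit. Unset Printing Implicit Defensive.

(* A non-strict temporal graph on a finite vertex type V with lifetime L:
   G t is a partition of V (into components) for each time 1 <= t <= L. *)
Definition temporal_graph (V : finType) (G : nat -> {set {set V}}) (L : nat) : Prop :=
  forall t, 1 <= t <= L -> partition (G t) [set: V].

(* The transition from step i to step i+1 is free: every component of G i
   meets every component of G (i+1).  For two-component layers this is
   exactly the four non-empty intersections of the paper. *)
Definition free_transition (V : finType) (G : nat -> {set {set V}}) (i : nat) : Prop :=
  forall C D, C \in G i -> D \in G i.+1 -> C :&: D != set0.

Definition exploration_schedule (V : finType) (G : nat -> {set {set V}}) (L : nat)
    (s : V) : Prop :=
  exists (l : nat) (C : nat -> {set V}),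
    [/\ 1 <= l <= L,
        (forall j, 1 <= j <= l -> C j \in G j),
        (forall j, 1 <= j < l -> C j :&: C j.+1 != set0),
        s \in C 1 &
        (forall v : V, exists2 j, 1 <= j <= l & v \in C j)].

(* Main.v *)
Require Import Defs.
From mathcomp Require Import all_boot.
From mathcomp Require Import zify.

Set Implicit Arguments. Unset Strict Implicit.

Section S.
Variables (V : finType) (G : nat -> {set {set V}}) (L : nat) (s : V).

Definition Walk l (C : nat -> {set V}) :=
  [/\ 1 <= l <= L, (forall j, 1 <= j <= l -> C j \in G j),
      (forall j, 1 <= j < l -> C j :&: C j.+1 != set0) & s \in C 1].

Lemma walk_ext l C D : Walk l C -> D \in G l.+1 -> l.+1 <= L ->
  C l :&: D != set0 ->
  Walk l.+1 (fun j => if j == l.+1 then D else C j).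
Proof.
case=> /andP[l1 lL] HG HI Hs HD lL' HCD; split.
- by apply/andP; split.
- move=> j /andP[j1 jl]; case: eqP => [->//|/eqP ne]; apply: HG.
  by apply/andP; split => //; lia.
- move=> j /andP[j1 jl]; have -> : (j == l.+1) = false by lia.
  case: (ltnP j.+1 l.+1) => h.
  + have -> : (j.+1 == l.+1) = false by lia.
    by apply: HI; apply/andP; split => //; lia.
  + have ej : j = l by lia.
    by subst j; rewrite eqxx.
- have -> : (1 == l.+1) = false by lia. done.
Qed.

Lemma walk_cov l (C : nat -> {set V}) (D W : {set V}) :
  (forall v, v \notin W -> exists2 j, 1 <= j <= l & v \in C j) ->
  forall v, v \notin W :\: D ->
  exists2 j, 1 <= j <= l.+1 & v \in (fun j => if j == l.+1 then D else C j) j.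
Proof.
move=> H v; rewrite in_setD negb_and negbK.
case/orP => [vD|vW].
- by exists l.+1; [lia | rewrite eqxx].
- case: (H v vW) => j jl vj; exists j; first lia.
  by have -> : (j == l.+1) = false by lia.
Qed.

End S.

Lemma part_cover (V : finType) (P : {set {set V}}) (v : V) :
  partition P [set: V] -> exists2 B, B \in P & v \in B.
Proof.
case/and3P => /eqP Hc _ _.
have hv : v \in cover P by rewrite Hc inE.
by exists (pblock P v); [apply: pblock_mem | rewrite mem_pblock].
Qed.

Lemma part_nonempty (V : finType) (P : {set {set V}}) (B : {set V}) :
  partition P [set: V] -> B \in P -> B != set0.
Proof.
case/and3P => _ _ H0 HB; apply/negP => /eqP E; subst B.
by rewrite HB in H0.
Qed.

(* m >= 1 + log2 n (with m >= 1) is written as 1 <= m /\ n <= 2^(m-1). *)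
Theorem lemma5 (V : finType) (G : nat -> {set {set V}}) (L t m : nat) :
  temporal_graph G L ->
  (forall i, 1 <= i <= L -> #|G i| = 2) ->
  (forall i, 1 <= i < L -> G i != G i.+1) ->
  1 <= t -> 1 <= m -> #|V| <= 2 ^ m.-1 -> t + m <= L ->
  (forall j, t <= j < t + m -> free_transition G j) ->
  forall s : V, exploration_schedule G L s.
Proof.
move=> HT H2 _ t1 m1 Hn HL Hfree s.
have step1 : forall l, 1 <= l <= t -> exists C, Walk G L s l C.
  elim=> [|l IH] hl; first lia.
  case: (boolP (l == 0)) => [/eqP l0|lpos].
  - subst l.
    have P1 : partition (G 1) [set: V] by apply: HT; lia.
    case: (part_cover s P1) => B HB sB.
    exists (fun _ => B); split => //; first lia.
    + move=> j hj; have -> : j = 1 by lia.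
      done.
    + move=> j hj; lia.
  - have hl' : 1 <= l <= t by lia.
    case: (IH hl') => C HC.
    have Pl : partition (G l) [set: V] by apply: HT; lia.
    have Pl1 : partition (G l.+1) [set: V] by apply: HT; lia.
    have Cl : C l \in G l by case: HC => _ HG _ _; apply: HG; lia.
    case/set0Pn: (part_nonempty Pl Cl) => x xC.
    case: (part_cover x Pl1) => D HD xD.
    eexists; apply: (walk_ext HC HD); first lia.
    by apply/set0Pn; exists x; rewrite inE xC xD.
have step2 : forall k, k <= m -> exists C (W : {set V}),
   [/\ Walk G L s (t + k) C,
       (forall v, v \notin W -> exists2 j, 1 <= j <= t + k & v \in C j) &
       2 ^ k * #|W| <= #|V| ].
  elim=> [|k IH] hk.
  - have ht : 1 <= t <= t by lia.
    case: (step1 t ht) => C HC.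
    exists C, [set: V]; rewrite addn0; split => //.
    + by move=> v; rewrite inE.
    + by rewrite expn0 mul1n cardsT.
  - have hk' : k <= m by lia.
    case: (IH hk') => C [W [HC Hcov HW]].
    have hP : partition (G (t + k).+1) [set: V] by apply: HT; lia.
    have h2 : #|G (t + k).+1| == 2 by rewrite H2 //; lia.
    case/cards2P: h2 => D1 [D2 [_ EG]].
    have HD1 : D1 \in G (t + k).+1 by rewrite EG !inE eqxx.
    have HD2 : D2 \in G (t + k).+1 by rewrite EG !inE eqxx orbT.
    have cov : forall v, (v \in D1) || (v \in D2).
      move=> v; case: (part_cover v hP) => B; rewrite EG !inE.
      by case/orP => /eqP -> ->; rewrite ?orbT.
    have Hsub : forall D D' : {set V}, (forall v, (v \in D) || (v \in D')) ->
        #|W :&: D'| <= #|W :&: D| -> 2 * #|W :\: D| <= #|W|.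
      move=> D D' hc hle.
      have s1 : W :\: D \subset W :&: D'.
        apply/subsetP => v; rewrite !inE => /andP[vD vW].
        by move: (hc v); rewrite (negbTE vD) /= => ->; rewrite vW.
      have e : #|W| = #|W :&: D| + #|W :\: D|.
        by rewrite -(cardsID D W).
      have := subset_leq_card s1; lia.
    have Hfr : free_transition G (t + k) by apply: Hfree; lia.
    have Cin : C (t + k) \in G (t + k) by case: HC => _ HG _ _; apply: HG; lia.
    have pick : exists2 D, D \in G (t + k).+1 & 2 * #|W :\: D| <= #|W|.
      case: (leqP #|W :&: D2| #|W :&: D1|) => h.
      - by exists D1 => //; apply: (Hsub D1 D2).
      - exists D2 => //; apply: (Hsub D2 D1) => [v|]; last lia.
        by rewrite orbC.
    case: pick => D HD HWD.
    exists (fun j => if j == (t + k).+1 then D else C j), (W :\: D).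
    rewrite addnS; split.
    + apply: (walk_ext HC HD); first lia.
      exact: Hfr.
    + exact: walk_cov.
    + rewrite expnS -mulnA; apply: leq_trans HW.
      by rewrite mulnCA leq_mul2l HWD orbT.
case: (step2 m (leqnn m)) => C [W [HC Hcov HW]].
have W0 : W = set0.
  apply/eqP; rewrite -cards_eq0; apply/eqP.
  have : 2 ^ m * #|W| <= 2 ^ m.-1 by apply: leq_trans Hn.
  have e : 2 ^ m = 2 * 2 ^ m.-1 by rewrite -expnS prednK.
  rewrite e; have := expn_gt0 2 m.-1; nia.
case: HC => hl HG HI Hs.
exists (t + m), C; split => // v.
by apply: Hcov; rewrite W0 inE.
Qed.
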